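(* Let $\sigma$ and $\sigma'$ be two distinct translated copies of a regular $k$-gon in $\mathbb{R}^2$, $k\ge 4$, whose interiors have a non-empty intersection. Let $p$ be any point in $\sigma\cap\sigma'$. Let $x$ and $y$ be two points of $\partial\sigma\cap\partial\sigma'$ lying in two different connected components of $\partial\sigma\cap\partial\sigma'$. Then the angle $\angle xpy$ of the triangle $\triangle xpy$ is at least $\frac{\pi}{4}$.
   Context: $\partial\sigma$ denotes the boundary of $\sigma$. A connected component of a set is a maximal connected subset of it. *)

(* Defs.v *)
From HB Require Import structures.
From mathcomp Require Import all_boot all_order all_algebra.
From mathcomp Require Import all_classical all_reals all_analysis.
Set Implicit Arguments. Unset Strict Implicit. Unset Printing Implicit Defensive.
Import Order.TTheory GRing.Theory Num.Theory.
Import numFieldNormedType.Exports.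
Local Open Scope classical_set_scope.
Local Open Scope ring_scope.

Section Defs.
Variable R : realType.
Notation P := (R * R)%type.

Definition rpoly_vertex (k : nat) (c : P) (r th : R) (j : nat) : P :=
  (c.1 + r * cos (th + 2 * pi * j%:R / k%:R),
   c.2 + r * sin (th + 2 * pi * j%:R / k%:R)).

Definition regular_polygon (k : nat) (c : P) (r th : R) : set P :=
  [set z | exists l : 'I_k -> R,
     (forall j, 0 <= l j) /\ \sum_(j < k) l j = 1 /\
     z = (\sum_(j < k) l j * (rpoly_vertex k c r th j).1,
          \sum_(j < k) l j * (rpoly_vertex k c r th j).2)].

Definition is_regular_kgon (k : nat) (S : set P) : Prop :=
  exists (c : P) (r th : R), 0 < r /\ S = regular_polygon k c r th.

Definition translate (t : P) (S : set P) : set P :=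
  [set z | exists2 w, S w & z = (w.1 + t.1, w.2 + t.2)].

Definition boundary (S : set P) : set P := closure S `\` interior S.

Definition dot (u v : P) : R := u.1 * v.1 + u.2 * v.2.
Definition vsub (u v : P) : P := (u.1 - v.1, u.2 - v.2).
Definition vnorm (u : P) : R := Num.sqrt (dot u u).

Definition angle (x p y : P) : R :=
  acos (dot (vsub x p) (vsub y p) / (vnorm (vsub x p) * vnorm (vsub y p))).
End Defs.

(* Main.v *)
Require Import Defs.
From HB Require Import structures.
From mathcomp Require Import all_boot all_order all_algebra.
From mathcomp Require Import all_classical all_reals all_analysis.
From mathcomp Require Import ring lra.
Import Order.TTheory GRing.Theory Num.Theory.
Import numFieldNormedType.Exports.
Local Open Scope classical_set_scope.
Local Open Scope ring_scope.
Set Implicit Arguments. Unset Strict Implicit. Unset Printing Implicit Defensive.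

Section Trig.
Variable R : realType.

Lemma cos_anti (a b : R) : 0 <= a -> a <= b -> b <= pi -> cos b <= cos a.
Proof.
move=> a0 ab bpi.
have ha : a \in `[0, pi]. by rewrite in_itv /=; apply/andP; split => //; lra.
have hb : b \in `[0, pi]. by rewrite in_itv /=; apply/andP; split => //; lra.
rewrite leNgt (ltr_cos hb ha) -leNgt //.
Qed.

Lemma cos_2pi_sub (a : R) : cos (2 * pi - a) = cos a.
Proof.
have -> : 2 * pi - a = - a + pi *+ 2 by rewrite mulr2n; ring.
by rewrite cosD2pi cosN.
Qed.

Lemma cos_le_edge (q a : R) : 0 <= q -> q <= pi -> q <= a -> a <= 2 * pi - q -> cos a <= cos q.
Proof.
move=> q0 qpi qa aq.
have [api|api] := lerP a pi; first exact: cos_anti.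
rewrite -cos_2pi_sub; apply: cos_anti => //; lra.
Qed.

Lemma cos_pi4_sq : cos (pi / 4) ^+ 2 = 1 / 2 :> R.
Proof.
have h := cos_mulr2n (pi / 4 : R).
have e : (pi / 4) *+ 2 = pi / 2 :> R by rewrite mulr2n; field.
rewrite e cos_pihalf mulr2n in h.
move: h; set X := cos (pi / 4) ^+ 2 => h.
have -> : X = (X + X) / 2 by field.
by rewrite -(subr0 (X + X)) h; field.
Qed.

Lemma cos_pi4_gt0 : 0 < cos (pi / 4 : R).
Proof. apply: cos_gt0_pihalf; have := pi_gt0 R => h; apply/andP; split; lra. Qed.

End Trig.

Definition cross {R : realType} (a b : R * R) : R := a.1 * b.2 - a.2 * b.1.

Section Poly.
Variable R : realType.
Variable k : nat.
Hypothesis hk : (4 <= k)%N.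
Variables (r th : R).
Hypothesis hr : 0 < r.

Local Notation kR := (k%:R : R).
Definition thv (j : nat) : R := th + 2 * pi * j%:R / kR.
Definition phv (j : nat) : R := th + (2 * j%:R + 1) * pi / kR.
Definition nv (j : nat) : R * R := (cos (phv j), sin (phv j)).
Definition wv (j : nat) : R * R := (r * cos (thv j), r * sin (thv j)).
Definition rho : R := r * cos (pi / kR).

Lemma kR_gt0 : 0 < kR.
Proof. by rewrite ltr0n; apply: leq_trans hk. Qed.

Lemma kR_ge4 : 4 <= kR.
Proof. by rewrite (ler_nat R 4 k). Qed.

Lemma pik_gt0 : 0 < pi / kR.
Proof. by apply: divr_gt0; [exact: pi_gt0 | exact: kR_gt0]. Qed.

Lemma pik_le : pi / kR <= pi / 4.
Proof.
rewrite ler_pM2l ?pi_gt0 // lef_pV2 ?posrE ?kR_gt0 //; exact: kR_ge4.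
Qed.

Lemma pik_mul (m : R) : m * pi / kR = m * (pi / kR).
Proof. by rewrite mulrA. Qed.

Lemma cospik_ge : cos (pi / 4) <= cos (pi / kR).
Proof. apply: cos_anti; [exact: ltW pik_gt0 | exact: pik_le |].
have := pi_gt0 R; lra.
Qed.

Lemma cospik_gt0 : 0 < cos (pi / kR).
Proof. exact: lt_le_trans (cos_pi4_gt0 R) cospik_ge. Qed.

Lemma rho_gt0 : 0 < rho.
Proof. by apply: mulr_gt0 => //; exact: cospik_gt0. Qed.

Lemma rho_bound : r ^+ 2 <= 2 * rho ^+ 2.
Proof.
have h1 := cospik_ge; have h2 := cos_pi4_gt0 R; have h3 := cos_pi4_sq R.
have : cos (pi / 4) ^+ 2 <= cos (pi / kR) ^+ 2.
  by rewrite ler_sqr ?nnegrE; [exact: h1 | lra | lra].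
rewrite /rho h3 exprMn => h4.
have : 0 <= r ^+ 2 by nra.
nra.
Qed.

Lemma cos_mpik (m : R) : 1 <= m -> m <= 2 * kR - 1 -> cos (m * pi / kR) <= cos (pi / kR).
Proof.
move=> m1 m2; have q0 := pik_gt0; have hk0 := kR_gt0.
apply: cos_le_edge.
- exact: ltW.
- have := pik_le; have := pi_gt0 R; lra.
- rewrite pik_mul; nra.
- have -> : 2 * pi - pi / kR = (2 * kR - 1) * (pi / kR) by field; apply: lt0r_neq0.
  rewrite pik_mul; nra.
Qed.

Lemma thv_phv (i j : nat) : thv i - phv j = (2 * (i%:R - j%:R) - 1) * pi / kR.
Proof. rewrite /thv /phv; field; apply: lt0r_neq0; exact: kR_gt0. Qed.

Lemma dot_nw (i j : nat) : dot (nv j) (wv i) = r * cos (thv i - phv j).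
Proof. rewrite /dot /nv /wv /= cosB; ring. Qed.

Lemma dot_nw_le (i j : nat) : (i < k)%N -> (j < k)%N -> dot (nv j) (wv i) <= rho.
Proof.
move=> ik jk; rewrite dot_nw /rho ler_pM2l // thv_phv.
have hk0 := kR_gt0.
have [ji|ij] := ltnP j i.
  have hd : (i%:R - j%:R : R) = (i - j)%:R by rewrite natrB // ltnW.
  have d1 : (1 <= (i - j)%:R :> R) by rewrite ler1n subn_gt0.
  have d2 : ((i - j)%:R <= kR :> R) by rewrite ler_nat; apply: leq_trans (leq_subr _ _) (ltnW ik).
  rewrite hd; apply: cos_mpik; lra.
have hd : (i%:R - j%:R : R) = - (j - i)%:R by rewrite natrB // opprB.
have d2 : ((j - i)%:R <= kR - 1 :> R).
  have : ((j - i).+1 <= k)%N by apply: leq_ltn_trans (leq_subr i j) jk.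
  rewrite -(ler_nat R) -addn1 natrD; lra.
have d1 : (0 <= (j - i)%:R :> R) by [].
rewrite hd -cosN.
have -> : - ((2 * - (j - i)%:R - 1) * pi / kR) = (2 * (j - i)%:R + 1) * pi / kR :> R.
  rewrite -!mulrA; ring.
apply: cos_mpik; lra.
Qed.

Lemma dot_nw_eq0 (j : nat) : dot (nv j) (wv j) = rho.
Proof.
rewrite dot_nw thv_phv subrr /rho.
have -> : (2 * 0 - 1) * pi / kR = - (pi / kR) :> R by ring.
by rewrite cosN.
Qed.

Lemma dot_nw_eq1 (j : nat) : dot (nv j) (wv j.+1) = rho.
Proof.
rewrite dot_nw thv_phv /rho; congr (_ * cos _).
rewrite -natr1; ring.
Qed.

Lemma thv_S (j : nat) : thv j.+1 - thv j = 2 * pi / kR.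
Proof. rewrite /thv -natr1; field; apply: lt0r_neq0; exact: kR_gt0. Qed.

Lemma cross_ww (j : nat) : cross (wv j) (wv j.+1) = r ^+ 2 * sin (2 * pi / kR).
Proof. rewrite -(thv_S j) sinB /cross /wv /=; ring. Qed.

Lemma sin2pik_gt0 : 0 < sin (2 * pi / kR).
Proof.
apply: sin_gt0_pi; have h := pik_le; have h0 := pik_gt0; apply/andP; split.
  by rewrite -mulrA; apply: mulr_gt0.
rewrite -mulrA; have := pi_gt0 R; lra.
Qed.

Lemma thv_k : thv k = thv 0 + pi *+ 2.
Proof. rewrite /thv mulr2n mulr0 mul0r addr0; field; apply: lt0r_neq0; exact: kR_gt0. Qed.

Lemma wv_k : wv k = wv 0.
Proof. by rewrite /wv thv_k cosD2pi sinD2pi. Qed.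
Lemma sinpik_gt0 : 0 < sin (pi / kR).
Proof.
apply: sin_gt0_pi; have h := pik_le; have h0 := pik_gt0; apply/andP; split => //.
have := pi_gt0 R; lra.
Qed.

Lemma thv_Sp (i : nat) : thv i.+1 - pi / kR = thv i + pi / kR.
Proof. have := thv_S i; lra. Qed.

Lemma sum_cos : \sum_(i < k) cos (thv i) = 0.
Proof.
have hs := sinpik_gt0.
suff : (sin (pi / kR) *+ 2) * \sum_(i < k) cos (thv i) = 0.
  move/eqP; rewrite mulf_eq0 => /orP [|/eqP //].
  by rewrite mulrn_eq0 /= => /eqP h; move: hs; rewrite h ltxx.
rewrite big_distrr /=.
rewrite (eq_bigr (fun i : 'I_k => sin (thv i.+1 - pi / kR) - sin (thv i - pi / kR))); last first.
  move=> i _; rewrite thv_Sp sinD sinB; ring.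
rewrite -(big_mkord xpredT (fun i => sin (thv i.+1 - pi / kR) - sin (thv i - pi / kR))).
rewrite telescope_sumr // thv_k.
have -> : thv 0 + pi *+ 2 - pi / kR = (thv 0 - pi / kR) + pi *+ 2 by ring.
by rewrite sinD2pi subrr.
Qed.

Lemma sum_sin : \sum_(i < k) sin (thv i) = 0.
Proof.
have hs := sinpik_gt0.
suff : (sin (pi / kR) *+ 2) * \sum_(i < k) sin (thv i) = 0.
  move/eqP; rewrite mulf_eq0 => /orP [|/eqP //].
  by rewrite mulrn_eq0 /= => /eqP h; move: hs; rewrite h ltxx.
rewrite big_distrr /=.
rewrite (eq_bigr (fun i : 'I_k => cos (thv i - pi / kR) - cos (thv i.+1 - pi / kR))); last first.
  move=> i _; rewrite thv_Sp cosB cosD; ring.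
have e : forall i : nat, cos (thv i - pi / kR) - cos (thv i.+1 - pi / kR) =
   (- cos (thv i.+1 - pi / kR)) - (- cos (thv i - pi / kR)) by move=> i; ring.
rewrite (eq_bigr (fun i : 'I_k => (- cos (thv i.+1 - pi / kR)) - (- cos (thv i - pi / kR)))); last by move=> i _; exact: e.
rewrite -(big_mkord xpredT (fun i => (- cos (thv i.+1 - pi / kR)) - (- cos (thv i - pi / kR)))).
rewrite telescope_sumr // thv_k.
have -> : thv 0 + pi *+ 2 - pi / kR = (thv 0 - pi / kR) + pi *+ 2 by ring.
by rewrite cosD2pi subrr.
Qed.
Definition Hs (c : R * R) := [set z | forall j : 'I_k, dot (nv j) (vsub z c) <= rho].
Definition Ss (c : R * R) := [set z | forall j : 'I_k, dot (nv j) (vsub z c) < rho].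

Lemma comb_c (l : 'I_k -> R) (c0 : R) (a : 'I_k -> R) : \sum_(j < k) l j = 1 ->
  \sum_(j < k) l j * (c0 + a j) - c0 = \sum_(j < k) l j * a j.
Proof.
move=> hl.
under eq_bigr do rewrite mulrDr.
rewrite big_split /= -big_distrl /= hl mul1r; ring.
Qed.

Lemma poly_sub_H c : regular_polygon k c r th `<=` Hs c.
Proof.
move=> z [l [l0 [l1 ->]]] i.
rewrite /vsub /= !comb_c //.
have -> : dot (nv i) (\sum_(j < k) l j * (r * cos (th + 2 * pi * j%:R / k%:R)),
      \sum_(j < k) l j * (r * sin (th + 2 * pi * j%:R / k%:R)))
   = \sum_(j < k) l j * dot (nv i) (wv j).
  rewrite /dot /= !big_distrr -big_split /=; apply: eq_bigr => j _; rewrite /wv /thv /=; ring.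
apply: le_trans (_ : \sum_(j < k) l j * rho <= rho).
  apply: ler_sum => j _; apply: ler_wpM2l => //; exact: dot_nw_le.
by rewrite -big_distrl /= l1 mul1r.
Qed.

Lemma sign_change (G : nat -> R) (n : nat) : (0 < n)%N -> G n = G 0%N ->
  \sum_(i < n) G i = 0 -> exists j, (j < n)%N /\ 0 <= G j /\ G j.+1 <= 0.
Proof.
move=> n0 Gn Gs; apply/not_existsP => hn.
have step : forall j, (j < n)%N -> 0 <= G j -> 0 < G j.+1.
  move=> j jn gj; rewrite ltNge; apply/negP => gj1; apply: (hn j); split => //.
have A : forall a, (a < n)%N -> 0 <= G a -> forall m, (a < m <= n)%N -> 0 < G m.
  move=> a an ga; elim=> [|m IH] //; rewrite ltnS => /andP [am mn].
  have [<-|ne] := eqVneq a m; first exact: step.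
  have am' : (a < m)%N by rewrite ltn_neqAle ne am.
  by apply: step; [exact: mn | apply: ltW; apply: IH; rewrite am' ltnW].
have [[i [ilt gi]]|none] := pselect (exists i, (i < n)%N /\ 0 <= G i).
  have g0 : 0 < G 0%N by rewrite -Gn; apply: (A i) => //; rewrite ilt leqnn.
  have allpos : forall m, (m < n)%N -> 0 < G m.
    move=> [|m] mn //; apply: (A 0%N); [exact: n0 | exact: ltW g0 | by rewrite /= ltnW].
  move: Gs; case: n n0 Gn {A step hn ilt} allpos => // n _ _ allpos.
  rewrite big_ord_recl => hs.
  have : 0 <= \sum_(i0 < n) G (bump 0 i0).
    by apply: sumr_ge0 => j _; apply: ltW; apply: allpos; rewrite /bump /= ltnS.
  have := allpos 0%N erefl; lra.
have allneg : forall m, (m < n)%N -> G m < 0.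
  by move=> m mn; rewrite ltNge; apply/negP => h; apply: none; exists m.
move: Gs; case: n n0 Gn {A step hn none} allneg => // n _ _ allneg.
rewrite big_ord_recl => hs.
have : \sum_(i0 < n) G (bump 0 i0) <= 0.
  by apply: sumr_le0 => j _; apply: ltW; apply: allneg; rewrite /bump /= ltnS.
have := allneg 0%N erefl; lra.
Qed.
Lemma sum_ind (j0 : 'I_k) (x : R) (f : 'I_k -> R) :
  \sum_(i < k) (if i == j0 then x else 0) * f i = x * f j0.
Proof.
rewrite (eq_bigr (fun i => if i == j0 then x * f i else 0)); last first.
  by move=> i _; case: (i == j0) => //; rewrite mul0r.
by rewrite -big_mkcond big_pred1_eq.
Qed.

Lemma k_gt0 : (0 < k)%N.
Proof. exact: leq_trans hk. Qed.

Lemma H_sub_poly c : Hs c `<=` regular_polygon k c r th.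
Proof.
move=> z hz.
pose q := vsub z c.
pose G := fun i : nat => cross (wv i) q.
have k0 := k_gt0.
have Gk : G k = G 0%N by rewrite /G wv_k.
have Gs : \sum_(i < k) G i = 0.
  rewrite /G /cross /wv /=.
  have -> : \sum_(i < k) (r * cos (thv i) * q.2 - r * sin (thv i) * q.1) =
     r * q.2 * (\sum_(i < k) cos (thv i)) - r * q.1 * (\sum_(i < k) sin (thv i)).
    by rewrite !big_distrr -sumrB; apply: eq_bigr => i _ /=; ring.
  by rewrite sum_cos sum_sin; ring.
have [j [jk [Gj Gj1]]] := sign_change k0 Gk Gs.
have D0 : 0 < cross (wv j) (wv j.+1).
  by rewrite cross_ww; apply: mulr_gt0; [exact: exprn_gt0 | exact: sin2pik_gt0].
have Dn0 : cross (wv j) (wv j.+1) != 0 by exact: lt0r_neq0.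
pose al := cross q (wv j.+1) / cross (wv j) (wv j.+1).
pose be := G j / cross (wv j) (wv j.+1).
have al0 : 0 <= al.
  apply: divr_ge0; last exact: ltW.
  have -> : cross q (wv j.+1) = - G j.+1 by rewrite /G /cross; ring.
  by rewrite oppr_ge0.
have be0 : 0 <= be by apply: divr_ge0 => //; exact: ltW.
have qe1 : q.1 = al * (wv j).1 + be * (wv j.+1).1.
  by rewrite /al /be /G /cross; field.
have qe2 : q.2 = al * (wv j).2 + be * (wv j.+1).2.
  by rewrite /al /be /G /cross; field.
have hab : al + be <= 1.
  have := hz (Ordinal jk); rewrite -/q /=.
  have -> : dot (nv j) q = al * dot (nv j) (wv j) + be * dot (nv j) (wv j.+1).
    by rewrite /dot qe1 qe2; ring.
  rewrite dot_nw_eq0 dot_nw_eq1 -mulrDl => h.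
  have hr0 := rho_gt0.
  by rewrite -(ler_pM2r hr0) mul1r.
pose j' : 'I_k := Ordinal (ltn_pmod j.+1 k0).
have wj' : wv j' = wv j.+1.
  rewrite /j' /=; have := jk; rewrite leq_eqVlt => /orP [/eqP ->|jk'].
    by rewrite modnn wv_k.
  by rewrite modn_small.
pose l := fun i : 'I_k => (if i == Ordinal jk then al else 0) + (if i == j' then be else 0)
   + (1 - al - be) / kR.
have hk0 := kR_gt0.
have suml : forall f : 'I_k -> R, \sum_(i < k) l i * f i =
    al * f (Ordinal jk) + be * f j' + (1 - al - be) / kR * \sum_(i < k) f i.
  move=> f; rewrite /l.
  under eq_bigr do rewrite !mulrDl.
  rewrite !big_split /= !sum_ind mulr_sumr -!big_split /=; congr (_ + _); apply: eq_bigr => i _ /=; ring.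
have l1 : \sum_(i < k) l i = 1.
  transitivity (\sum_(i < k) l i * 1); first by apply: eq_bigr => i _; rewrite mulr1.
  rewrite (suml (fun _ => 1)) /= !mulr1.
  rewrite sumr_const card_ord -mulr_natr; field; exact: lt0r_neq0.
have sw1 : \sum_(i < k) (wv i).1 = 0 by rewrite /wv /= -mulr_sumr sum_cos mulr0.
have sw2 : \sum_(i < k) (wv i).2 = 0 by rewrite /wv /= -mulr_sumr sum_sin mulr0.
exists l; split.
  move=> i; rewrite /l; apply: addr_ge0; last by apply: divr_ge0; [lra | exact: ltW].
  by apply: addr_ge0; case: (_ == _).
split => //.
have e1 : \sum_(i < k) l i * (rpoly_vertex k c r th i).1 = z.1.
  transitivity (c.1 + \sum_(i < k) l i * (wv i).1).
    rewrite -(comb_c c.1 (fun i => (wv i).1) l1) addrC subrK.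
    by apply: eq_bigr => i _; rewrite /rpoly_vertex /wv /thv.
  rewrite suml wj' /= sw1 mulr0 addr0 -qe1 /q /vsub /=; ring.
have e2 : \sum_(i < k) l i * (rpoly_vertex k c r th i).2 = z.2.
  transitivity (c.2 + \sum_(i < k) l i * (wv i).2).
    rewrite -(comb_c c.2 (fun i => (wv i).2) l1) addrC subrK.
    by apply: eq_bigr => i _; rewrite /rpoly_vertex /wv /thv.
  rewrite suml wj' /= sw2 mulr0 addr0 -qe2 /q /vsub /=; ring.
by rewrite e1 e2 -surjective_pairing.
Qed.
End Poly.

Section Topo.
Variable R : realType.

Lemma nbhs_box (z : R * R) (A : set (R * R)) : nbhs z A <-> exists2 e : R, 0 < e &
  forall w : R * R, `|z.1 - w.1| < e -> `|z.2 - w.2| < e -> A w.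
Proof.
split.
- move=> /nbhs_ballP [e e0 he]; exists e => // w h1 h2; apply: he.
  by split => /=; rewrite /ball /=.
- move=> [e e0 he]; apply/nbhs_ballP; exists e => // w [h1 h2]; apply: he.
  + by move: h1; rewrite /ball /=.
  + by move: h2; rewrite /ball /=.
Qed.

Lemma lin_near (n c z : R * R) (g : R) : n.1 ^+ 2 + n.2 ^+ 2 = 1 ->
  dot n (vsub z c) < g -> nbhs z [set w | dot n (vsub w c) < g].
Proof.
move=> hn hz; apply/nbhs_box.
pose e := (g - dot n (vsub z c)) / 2.
have e0 : 0 < e by rewrite /e; apply: divr_gt0 => //; rewrite subr_gt0.
exists e => // w h1 h2 /=.
have b1 : `|n.1| <= 1.
  have : `|n.1| ^+ 2 <= 1 by rewrite real_normK ?num_real; have := sqr_ge0 n.2; lra.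
  by rewrite expr_le1 // normr_ge0.
have b2 : `|n.2| <= 1.
  have : `|n.2| ^+ 2 <= 1 by rewrite real_normK ?num_real; have := sqr_ge0 n.1; lra.
  by rewrite expr_le1 // normr_ge0.
have : dot n (vsub w c) - dot n (vsub z c) <= `|w.1 - z.1| + `|w.2 - z.2|.
  have -> : dot n (vsub w c) - dot n (vsub z c) = n.1 * (w.1 - z.1) + n.2 * (w.2 - z.2).
    by rewrite /dot /vsub /=; ring.
  apply: le_trans (ler_norm _) _; apply: le_trans (ler_normD _ _) _.
  rewrite !normrM; apply: lerD.
    by rewrite -[X in _ <= X]mul1r; apply: ler_wpM2r.
  by rewrite -[X in _ <= X]mul1r; apply: ler_wpM2r.
rewrite distrC in h1; rewrite distrC in h2.
rewrite /e in h1 h2; lra.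
Qed.

End Topo.
Section PolyTopo.
Variable R : realType.
Variable k : nat.
Hypothesis hk : (4 <= k)%N.
Variables (r th : R).
Hypothesis hr : 0 < r.

Local Notation K c := (regular_polygon k c r th).
Local Notation H c := (Hs k r th c).
Definition Ssk (c : R * R) := [set z | forall j : 'I_k, dot (nv k th j) (vsub z c) < rho k r].
Local Notation S c := (Ssk c).

Lemma nv_unit j : (nv k th j).1 ^+ 2 + (nv k th j).2 ^+ 2 = 1.
Proof. by rewrite /nv /= cos2Dsin2. Qed.

Lemma poly_eq c : K c = H c.
Proof. by apply/seteqP; split; [exact: poly_sub_H | exact: H_sub_poly]. Qed.

Lemma S_sub_H c : S c `<=` H c.
Proof. by move=> z hz j; apply: ltW. Qed.

Lemma S_open c z : S c z -> nbhs z (S c).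
Proof.
move=> hz.
have := @filter_forall (R * R)%type 'I_k (fun j w => dot (nv k th j) (vsub w c) < rho k r)
   (nbhs z) _ (fun j => lin_near (nv_unit j) (hz j)).
move=> h; exact: h.
Qed.

Lemma int_poly c : interior (K c) = S c.
Proof.
apply/seteqP; split; last first.
  move=> z /S_open hz; rewrite /interior /= poly_eq.
  by apply: filterS hz; exact: S_sub_H.
move=> z; rewrite /interior /= poly_eq => /nbhs_box [e e0 he] j.
rewrite ltNge; apply/negP => hj.
pose n := nv k th j.
pose w := (z.1 + e / 2 * n.1, z.2 + e / 2 * n.2).
have hn := nv_unit j.
have b1 : `|n.1| <= 1.
  have : `|n.1| ^+ 2 <= 1 by rewrite real_normK ?num_real; have := sqr_ge0 n.2; rewrite /n; lra.
  by rewrite expr_le1 // normr_ge0.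
have b2 : `|n.2| <= 1.
  have : `|n.2| ^+ 2 <= 1 by rewrite real_normK ?num_real; have := sqr_ge0 n.1; rewrite /n; lra.
  by rewrite expr_le1 // normr_ge0.
have e2 : 0 < e / 2 by apply: divr_gt0.
have hw : H c w.
  apply: he.
    rewrite /w /= opprD addrA subrr sub0r normrN normrM (gtr0_norm e2).
    apply: le_lt_trans (_ : e / 2 * 1 < e); last by lra.
    by apply: ler_wpM2l => //; exact: ltW.
  rewrite /w /= opprD addrA subrr sub0r normrN normrM (gtr0_norm e2).
  apply: le_lt_trans (_ : e / 2 * 1 < e); last by lra.
  by apply: ler_wpM2l => //; exact: ltW.
have := hw j.
have -> : dot (nv k th j) (vsub w c) = dot (nv k th j) (vsub z c) + e / 2.
  have h1 : n.1 * n.1 + n.2 * n.2 = 1 by rewrite -!expr2.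
  transitivity (dot n (vsub z c) + e / 2 * (n.1 * n.1 + n.2 * n.2)).
    by rewrite /dot /vsub /w /=; ring.
  by rewrite h1 mulr1.
lra.
Qed.

Lemma closure_poly c : closure (K c) = H c.
Proof.
apply/seteqP; split; last first.
  by rewrite -poly_eq; exact: subset_closure.
move=> z hz j; rewrite leNgt; apply/negP => hj.
have hn := nv_unit j.
have : nbhs z [set w | dot (nv k th j) (vsub w c) > rho k r].
  have hn' : (- nv k th j).1 ^+ 2 + (- nv k th j).2 ^+ 2 = 1 by rewrite /= !sqrrN.
  have := @lin_near R (- nv k th j) c z (- rho k r) hn'.
  have e : forall w, dot (- nv k th j) (vsub w c) = - dot (nv k th j) (vsub w c).
    by move=> w; rewrite /dot /=; ring.
  rewrite e ltrN2 => /(_ hj) h; apply: filterS h => w /=.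
  by rewrite e ltrN2.
move=> /hz [w [hw1 hw2]].
have := poly_sub_H hk hr hw1 j; move: hw2; rewrite /= => hw2; lra.
Qed.

Lemma comb_sq_id (l : 'I_k -> R) (a : 'I_k -> R) (m : R) :
  \sum_(i < k) l i * (a i - m) ^+ 2 =
   \sum_(i < k) l i * a i ^+ 2 - 2 * m * (\sum_(i < k) l i * a i) + m ^+ 2 * \sum_(i < k) l i.
Proof.
rewrite !mulr_sumr -sumrB -big_split /=; apply: eq_bigr => i _ /=; ring.
Qed.

Lemma comb_sq (l : 'I_k -> R) (a : 'I_k -> R) : (forall i, 0 <= l i) -> \sum_(i < k) l i = 1 ->
  (\sum_(i < k) l i * a i) ^+ 2 <= \sum_(i < k) l i * a i ^+ 2.
Proof.
move=> l0 l1.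
have := comb_sq_id l a (\sum_(i < k) l i * a i).
have : 0 <= \sum_(i < k) l i * (a i - \sum_(i < k) l i * a i) ^+ 2.
  by apply: sumr_ge0 => i _; apply: mulr_ge0 => //; exact: sqr_ge0.
move=> h e; rewrite e l1 in h.
move: h; move: (\sum_(i < k) l i * a i) (\sum_(i < k) l i * a i ^+ 2) => u v; nra.
Qed.

Lemma poly_disk c z : K c z -> (z.1 - c.1) ^+ 2 + (z.2 - c.2) ^+ 2 <= r ^+ 2.
Proof.
move=> [l [l0 [l1 ->]]] /=.
rewrite !comb_c //.
have h1 := comb_sq (fun j => r * cos (th + 2 * pi * j%:R / k%:R)) l0 l1.
have h2 := comb_sq (fun j => r * sin (th + 2 * pi * j%:R / k%:R)) l0 l1.
apply: le_trans (lerD h1 h2) _.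
rewrite -big_split /=.
have -> : \sum_(i < k) (l i * (r * cos (th + 2 * pi * i%:R / k%:R)) ^+ 2 +
     l i * (r * sin (th + 2 * pi * i%:R / k%:R)) ^+ 2) = \sum_(i < k) l i * r ^+ 2.
  apply: eq_bigr => i _; rewrite -mulrDr !exprMn -mulrDr cos2Dsin2 mulr1 //.
by rewrite -mulr_suml l1 mul1r.
Qed.

Lemma translate_poly c t : translate t (K c) = K (c.1 + t.1, c.2 + t.2).
Proof.
rewrite !poly_eq; apply/seteqP; split.
  move=> z [w hw ->] j; have := hw j.
  suff -> : vsub (w.1 + t.1, w.2 + t.2) (c.1 + t.1, c.2 + t.2) = vsub w c by [].
  by rewrite /vsub /=; congr (_, _); ring.
move=> z hz; exists (z.1 - t.1, z.2 - t.2).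
  move=> j; have := hz j.
  suff -> : vsub (z.1 - t.1, z.2 - t.2) c = vsub z (c.1 + t.1, c.2 + t.2) by [].
  by rewrite /vsub /=; congr (_, _); ring.
by rewrite /= !subrK -surjective_pairing.
Qed.

End PolyTopo.

Section Alg.
Variable R : realType.

(* inscribed angle lemma in coordinates *)
Lemma IA (a1 a2 b1 b2 p1 p2 R2 : R) :
  a1 ^+ 2 + a2 ^+ 2 = R2 -> b1 ^+ 2 + b2 ^+ 2 = R2 -> p1 ^+ 2 + p2 ^+ 2 <= R2 ->
  a1 * b1 + a2 * b2 <= 0 ->
  (a1 - p1) * (b1 - p1) + (a2 - p2) * (b2 - p2) <=
  `|(a1 - p1) * (b2 - p2) - (a2 - p2) * (b1 - p1)|.
Proof.
move=> hA hB hP hAB.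
pose e1 := (a1 + b1) / 2; pose e2 := (a2 + b2) / 2.
pose f1 := (a1 - b1) / 2; pose f2 := (a2 - b2) / 2.
pose w1 := p1 - e1; pose w2 := p2 - e2.
have ef : e1 * f1 + e2 * f2 = 0 by rewrite /e1 /e2 /f1 /f2; lra.
have eR : e1 ^+ 2 + e2 ^+ 2 + (f1 ^+ 2 + f2 ^+ 2) = R2 by rewrite /e1 /e2 /f1 /f2; lra.
have eABf : e1 ^+ 2 + e2 ^+ 2 <= f1 ^+ 2 + f2 ^+ 2 by rewrite /e1 /e2 /f1 /f2; lra.
have hX : (a1 - p1) * (b1 - p1) + (a2 - p2) * (b2 - p2) = w1 ^+ 2 + w2 ^+ 2 - (f1 ^+ 2 + f2 ^+ 2).
  by rewrite /w1 /w2 /e1 /e2 /f1 /f2; field.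
have hY : (a1 - p1) * (b2 - p2) - (a2 - p2) * (b1 - p1) = 2 * (w1 * f2 - w2 * f1).
  by rewrite /w1 /w2 /e1 /e2 /f1 /f2; field.
have hXle : w1 ^+ 2 + w2 ^+ 2 - (f1 ^+ 2 + f2 ^+ 2) <= - 2 * (w1 * e1 + w2 * e2).
  have : p1 = w1 + e1 by rewrite /w1; ring.
  have : p2 = w2 + e2 by rewrite /w2; ring.
  move=> h2 h1; rewrite h1 h2 in hP; lra.
rewrite hX hY.
set we := w1 * e1 + w2 * e2.
set wf := w1 * f2 - w2 * f1.
set F := f1 ^+ 2 + f2 ^+ 2.
set E := e1 ^+ 2 + e2 ^+ 2.
have id1 : we * F = wf * (e1 * f2 - e2 * f1).
  have : we * F = (w1 * f1 + w2 * f2) * (e1 * f1 + e2 * f2) + wf * (e1 * f2 - e2 * f1).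
    by rewrite /we /F /wf; ring.
  by rewrite ef mulr0 add0r.
have id2 : (e1 * f2 - e2 * f1) ^+ 2 = E * F.
  have : (e1 * f2 - e2 * f1) ^+ 2 = E * F - (e1 * f1 + e2 * f2) ^+ 2 by rewrite /E /F; ring.
  by rewrite ef expr0n subr0.
have F0 : 0 <= F by rewrite /F; nra.
have [Fz|Fp] := eqVneq F 0.
  have E0 : E = 0.
    have : 0 <= E by rewrite /E; nra.
    rewrite /E; rewrite /F in Fz; lra.
  have e10 : e1 = 0 by move: E0; rewrite /E; nra.
  have e20 : e2 = 0 by move: E0; rewrite /E; nra.
  move: hXle; rewrite e10 e20 !mulr0 addr0 mulr0 => hXle.
  have := normr_ge0 (2 * wf); rewrite /F in Fz *; lra.
have Fpos : 0 < F by rewrite lt0r Fp F0.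
have key : we ^+ 2 <= wf ^+ 2.
  have h : we ^+ 2 * (F * F) <= wf ^+ 2 * (F * F).
    have -> : we ^+ 2 * (F * F) = (we * F) ^+ 2 by ring.
    rewrite id1 exprMn id2.
    have : E * F <= F * F by rewrite ler_pM2r.
    have : 0 <= wf ^+ 2 by nra.
    nra.
  have FF : 0 < F * F by exact: mulr_gt0.
  by rewrite -(ler_pM2r FF).
have : - we <= `|wf|.
  have : `|we| <= `|wf| by rewrite -ler_sqr ?nnegrE // !real_normK ?num_real.
  have := ler_norm (- we); rewrite normrN; lra.
rewrite normrM gtr0_norm //; move: hXle; rewrite -/we -/F; lra.
Qed.

Lemma core_coord (rho r X1 X2 Y1 Y2 P1 P2 N1 N2 M1 M2 : R) :
  0 < rho -> r ^+ 2 <= 2 * rho ^+ 2 ->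
  X1 ^+ 2 + X2 ^+ 2 <= r ^+ 2 -> Y1 ^+ 2 + Y2 ^+ 2 <= r ^+ 2 -> P1 ^+ 2 + P2 ^+ 2 <= r ^+ 2 ->
  N1 ^+ 2 + N2 ^+ 2 = 1 -> M1 ^+ 2 + M2 ^+ 2 = 1 -> N1 <= 0 -> M1 <= 0 ->
  N1 * X1 + N2 * X2 = rho -> M1 * Y1 + M2 * Y2 = rho ->
  N1 * P1 + N2 * P2 <= rho -> M1 * P1 + M2 * P2 <= rho ->
  N1 * Y1 + N2 * Y2 <= rho -> M1 * X1 + M2 * X2 <= rho ->
  P1 <= X1 -> P1 <= Y1 -> P2 <= X2 -> Y2 <= P2 -> Y2 < X2 ->
  (X1 - P1) * (Y1 - P1) + (X2 - P2) * (Y2 - P2) <=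
  `|(X1 - P1) * (Y2 - P2) - (X2 - P2) * (Y1 - P1)|.
Proof.
move=> rho0 hr hX hY hP hN hM N10 M10 NX MY NP MP NY MX hd1 hd2 he1 he2 hxy.
have -> : (X1 - P1) * (Y2 - P2) - (X2 - P2) * (Y1 - P1) =
   - ((X1 - P1) * (P2 - Y2) + (X2 - P2) * (Y1 - P1)) by ring.
rewrite normrN ger0_norm; last by apply: addr_ge0; apply: mulr_ge0; lra.
have -> : (X1 - P1) * (Y1 - P1) + (X2 - P2) * (Y2 - P2) =
   (X1 - P1) * (Y1 - P1) - (X2 - P2) * (P2 - Y2) by ring.
move: hd1 hd2 he1 he2.
have -> : P1 <= X1 = (0 <= X1 - P1) by rewrite subr_ge0.
have -> : P1 <= Y1 = (0 <= Y1 - P1) by rewrite subr_ge0.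
have -> : P2 <= X2 = (0 <= X2 - P2) by rewrite subr_ge0.
have -> : Y2 <= P2 = (0 <= P2 - Y2) by rewrite subr_ge0.
have ee : 0 < (X2 - P2) + (P2 - Y2) by lra.
have NXP : 0 <= N1 * (X1 - P1) + N2 * (X2 - P2) by lra.
have MYP : 0 <= M1 * (Y1 - P1) - M2 * (P2 - Y2) by lra.
have NYP : N1 * (Y1 - X1) + N2 * (Y2 - X2) <= 0 by lra.
have MXP : M1 * (X1 - Y1) + M2 * (X2 - Y2) <= 0 by lra.
move: ee NXP MYP NYP MXP.
set d1 := X1 - P1; set d2 := Y1 - P1; set e1 := X2 - P2; set e2 := P2 - Y2.
move=> ee NXP MYP NYP MXP hd1 hd2 he1 he2.
have [de1|de1] := lerP d1 e1.
  have : d1 * d2 <= e1 * d2 by apply: ler_wpM2r.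
  have : 0 <= e1 * e2 by exact: mulr_ge0.
  have : 0 <= d1 * e2 by exact: mulr_ge0.
  lra.
have [de2|de2] := lerP d2 e2.
  have : d1 * d2 <= d1 * e2 by apply: ler_wpM2l.
  have : 0 <= e1 * e2 by exact: mulr_ge0.
  have : 0 <= e1 * d2 by exact: mulr_ge0.
  lra.
have d1p : 0 < d1 by lra.
have d2p : 0 < d2 by lra.
have N2p : 0 <= N2.
  rewrite leNgt; apply/negP => N2n.
  have N1z : N1 = 0.
    have h0 : 0 <= - N2 * e1 by nra.
    have h : 0 <= N1 * d1 by nra. apply/eqP; rewrite eq_le N10 /=.
    by rewrite -(pmulr_rge0 _ d1p) mulrC.
  have e1z : e1 = 0 by move: NXP; rewrite N1z mul0r add0r; nra.
  have N2m : N2 = -1.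
    move: hN; rewrite N1z expr0n /= add0r => h.
    have : (N2 - 1) * (N2 + 1) = 0 by rewrite -subr_sqr expr1n h subrr.
    move/eqP; rewrite mulf_eq0 => /orP [/eqP h1|/eqP h1]; lra.
  move: NX NY; rewrite N1z N2m !mul0r !add0r !mulN1r => NX NY.
  have : e2 <= 0 by rewrite /e2; move: e1z; rewrite /e1; lra.
  lra.
have M2n : M2 <= 0.
  rewrite leNgt; apply/negP => M2p.
  have M1z : M1 = 0.
    have h0 : 0 <= M2 * e2 by nra.
    have h : 0 <= M1 * d2 by nra. apply/eqP; rewrite eq_le M10 /=.
    by rewrite -(pmulr_rge0 _ d2p) mulrC.
  have e2z : e2 = 0 by move: MYP; rewrite M1z mul0r add0r; nra.
  have M2m : M2 = 1.
    move: hM; rewrite M1z expr0n /= add0r => h.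
    have : (M2 - 1) * (M2 + 1) = 0 by rewrite -subr_sqr expr1n h subrr.
    move/eqP; rewrite mulf_eq0 => /orP [/eqP h1|/eqP h1]; lra.
  move: MY MX; rewrite M1z M2m !mul0r !add0r !mul1r => MY MX.
  have : e1 <= 0 by rewrite /e1; move: e2z; rewrite /e2; lra.
  lra.
pose s := N2 * X1 - N1 * X2.
have X1e : X1 = rho * N1 + s * N2.
  rewrite /s -NX.
  have hh : X1 = X1 * (N1 ^+ 2 + N2 ^+ 2) by rewrite hN mulr1.
  rewrite {1}hh; ring.
have X2e : X2 = rho * N2 - s * N1.
  rewrite /s -NX.
  have hh : X2 = X2 * (N1 ^+ 2 + N2 ^+ 2) by rewrite hN mulr1.
  rewrite {1}hh; ring.
have s2 : s ^+ 2 <= rho ^+ 2.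
  have : X1 ^+ 2 + X2 ^+ 2 = rho ^+ 2 + s ^+ 2.
    rewrite X1e X2e; have -> : (rho * N1 + s * N2) ^+ 2 + (rho * N2 - s * N1) ^+ 2 =
      (rho ^+ 2 + s ^+ 2) * (N1 ^+ 2 + N2 ^+ 2) by ring.
    by rewrite hN mulr1.
  lra.
have sle : s <= rho.
  have : `|s| <= `|rho| by rewrite -ler_sqr ?nnegrE // !real_normK ?num_real.
  rewrite (gtr0_norm rho0); have := ler_norm s; lra.
pose lam := rho - s.
have lam0 : 0 <= lam by rewrite /lam; lra.
pose s' := - M2 * Y1 + M1 * Y2.
have Y1e : Y1 = rho * M1 - s' * M2.
  rewrite /s' -MY.
  have hh : Y1 = Y1 * (M1 ^+ 2 + M2 ^+ 2) by rewrite hM mulr1.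
  rewrite {1}hh; ring.
have Y2e : Y2 = rho * M2 + s' * M1.
  rewrite /s' -MY.
  have hh : Y2 = Y2 * (M1 ^+ 2 + M2 ^+ 2) by rewrite hM mulr1.
  rewrite {1}hh; ring.
have s'2 : s' ^+ 2 <= rho ^+ 2.
  have : Y1 ^+ 2 + Y2 ^+ 2 = rho ^+ 2 + s' ^+ 2.
    rewrite Y1e Y2e; have -> : (rho * M1 - s' * M2) ^+ 2 + (rho * M2 + s' * M1) ^+ 2 =
      (rho ^+ 2 + s' ^+ 2) * (M1 ^+ 2 + M2 ^+ 2) by ring.
    by rewrite hM mulr1.
  lra.
have s'le : s' <= rho.
  have : `|s'| <= `|rho| by rewrite -ler_sqr ?nnegrE // !real_normK ?num_real.
  rewrite (gtr0_norm rho0); have := ler_norm s'; lra.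
pose mu := rho - s'.
have mu0 : 0 <= mu by rewrite /mu; lra.
pose a1 := rho * (N1 + N2) - P1.
pose a2 := rho * (N2 - N1) - P2.
pose b1 := rho * (M1 - M2) - P1.
pose b2 := rho * (M1 + M2) - P2.
have a1e : a1 = d1 + lam * N2 by rewrite /a1 /d1 /lam X1e; ring.
have a2e : a2 = e1 - lam * N1 by rewrite /a2 /e1 /lam X2e; ring.
have b1e : b1 = d2 - mu * M2 by rewrite /b1 /d2 /mu Y1e; ring.
have b2e : b2 = - e2 + mu * M1 by rewrite /b2 /e2 /mu Y2e; ring.
have a1d : a1 = rho * (N1 + N2) - P1 by [].
have a2d : a2 = rho * (N2 - N1) - P2 by [].
have b1d : b1 = rho * (M1 - M2) - P1 by [].
have b2d : b2 = rho * (M1 + M2) - P2 by [].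
clearbody s s' lam mu a1 a2 b1 b2 d1 d2 e1 e2.
clear X1e X2e Y1e Y2e s2 s'2 sle s'le hX hY NX MY NP MP NY MX NYP MXP ee.
have a1p : 0 < a1.
  rewrite a1e; have : 0 <= lam * N2 by exact: mulr_ge0.
  lra.
have a2p : 0 <= a2.
  rewrite a2e; have : lam * N1 <= 0 by exact: mulr_ge0_le0.
  lra.
have b1p : 0 < b1.
  rewrite b1e; have : mu * M2 <= 0 by exact: mulr_ge0_le0.
  lra.
have b2n : b2 <= 0.
  rewrite b2e; have : mu * M1 <= 0 by exact: mulr_ge0_le0.
  lra.
have S1 : d1 * a2 <= e1 * a1.
  have : e1 * a1 - d1 * a2 = lam * (N1 * d1 + N2 * e1) by rewrite a1e a2e; ring.
  have : 0 <= lam * (N1 * d1 + N2 * e1) by apply: mulr_ge0 => //; lra.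
  lra.
have S2 : - d2 * b2 <= e2 * b1.
  have : e2 * b1 + d2 * b2 = mu * (M1 * d2 - M2 * e2) by rewrite b1e b2e; ring.
  have : 0 <= mu * (M1 * d2 - M2 * e2) by apply: mulr_ge0 => //; lra.
  lra.
have hIA := @IA (rho * (N1 + N2)) (rho * (N2 - N1)) (rho * (M1 - M2)) (rho * (M1 + M2)) P1 P2 (2 * rho ^+ 2).
have hA : (rho * (N1 + N2)) ^+ 2 + (rho * (N2 - N1)) ^+ 2 = 2 * rho ^+ 2.
  have -> : (rho * (N1 + N2)) ^+ 2 + (rho * (N2 - N1)) ^+ 2 = 2 * rho ^+ 2 * (N1 ^+ 2 + N2 ^+ 2) by ring.
  by rewrite hN mulr1.
have hB : (rho * (M1 - M2)) ^+ 2 + (rho * (M1 + M2)) ^+ 2 = 2 * rho ^+ 2.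
  have -> : (rho * (M1 - M2)) ^+ 2 + (rho * (M1 + M2)) ^+ 2 = 2 * rho ^+ 2 * (M1 ^+ 2 + M2 ^+ 2) by ring.
  by rewrite hM mulr1.
have hP' : P1 ^+ 2 + P2 ^+ 2 <= 2 * rho ^+ 2 by lra.
have hAB : rho * (N1 + N2) * (rho * (M1 - M2)) + rho * (N2 - N1) * (rho * (M1 + M2)) <= 0.
  have -> : rho * (N1 + N2) * (rho * (M1 - M2)) + rho * (N2 - N1) * (rho * (M1 + M2)) =
     2 * rho ^+ 2 * (N2 * M1 - N1 * M2) by ring.
  have : N2 * M1 - N1 * M2 <= 0.
    have : N2 * M1 <= 0 by exact: mulr_ge0_le0.
    have : 0 <= N1 * M2 by exact: mulr_le0.
    lra.
  apply: mulr_ge0_le0; apply: mulr_ge0 => //; exact: sqr_ge0.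
have h := hIA hA hB hP' hAB.
rewrite -a1d -a2d -b1d -b2d in h.
have IA1 : a1 * b1 + a2 * b2 <= a2 * b1 - a1 * b2.
  have q1 : a1 * b2 <= 0 by apply: mulr_ge0_le0 => //; exact: ltW.
  have q2 : 0 <= a2 * b1 by apply: mulr_ge0 => //; exact: ltW.
  have hc : a1 * b2 - a2 * b1 <= 0 by lra.
  rewrite ler0_norm // in h; lra.
have T1 : d1 * (a1 + a2) <= (d1 + e1) * a1.
  have -> : d1 * (a1 + a2) = d1 * a1 + d1 * a2 by ring.
  have -> : (d1 + e1) * a1 = d1 * a1 + e1 * a1 by ring.
  by rewrite lerD2l.
have T2 : d2 * (b1 - b2) <= (d2 + e2) * b1.
  have -> : d2 * (b1 - b2) = d2 * b1 + - d2 * b2 by ring.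
  have -> : (d2 + e2) * b1 = d2 * b1 + e2 * b1 by ring.
  by rewrite lerD2l.
have T3 : 2 * (a1 * b1) <= (a1 + a2) * (b1 - b2).
  have -> : (a1 + a2) * (b1 - b2) = a1 * b1 + (a2 * b1 - a1 * b2) - a2 * b2 by ring.
  move: IA1; move: (a1 * b1) (a2 * b2) (a2 * b1 - a1 * b2) => u v w; lra.
have ab : 0 < a1 * b1 by exact: mulr_gt0.
have T4 : (d1 * d2) * (2 * (a1 * b1)) <= ((d1 + e1) * (d2 + e2)) * (a1 * b1).
  apply: le_trans (_ : (d1 * d2) * ((a1 + a2) * (b1 - b2)) <= _).
    by apply: ler_wpM2l => //; apply: mulr_ge0; exact: ltW.
  have -> : d1 * d2 * ((a1 + a2) * (b1 - b2)) = (d1 * (a1 + a2)) * (d2 * (b1 - b2)) by ring.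
  have -> : (d1 + e1) * (d2 + e2) * (a1 * b1) = ((d1 + e1) * a1) * ((d2 + e2) * b1) by ring.
  apply: ler_pM => //.
    by apply: mulr_ge0; [exact: ltW | apply: addr_ge0 => //; exact: ltW].
  by apply: mulr_ge0; [exact: ltW | lra].
have T5 : (d1 * d2) * 2 <= (d1 + e1) * (d2 + e2).
  rewrite -(ler_pM2r ab).
  have -> : d1 * d2 * 2 * (a1 * b1) = (d1 * d2) * (2 * (a1 * b1)) by ring.
  exact: T4.
move: T5; clear.
have -> : (d1 + e1) * (d2 + e2) = d1 * d2 + d1 * e2 + e1 * d2 + e1 * e2 by ring.
move: (d1 * d2) (d1 * e2) (e1 * d2) (e1 * e2) => u v w z; lra.
Qed.
End Alg.

Section Geo.
Variable R : realType.
Variable k : nat.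
Hypothesis hk : (4 <= k)%N.
Variables (r th : R).
Hypothesis hr : 0 < r.
Variables (c t : R * R).
Hypothesis t0 : t.1 ^+ 2 + t.2 ^+ 2 != 0.

Local Notation H0 := (Hs k r th c).
Local Notation S0 := (Ssk k r th c).
Definition cp : R * R := (c.1 + t.1, c.2 + t.2).
Local Notation H1 := (Hs k r th cp).
Local Notation S1 := (Ssk k r th cp).
Definition mv (z : R * R) : R * R := (z.1 - t.1, z.2 - t.2).
Definition lerp (a b : R * R) (s : R) : R * R := (a.1 + s * (b.1 - a.1), a.2 + s * (b.2 - a.2)).
Definition Pl (q : R * R) (u : R) : R * R := (q.1 + u * t.1, q.2 + u * t.2).
Definition Zm z := [/\ H0 z, ~ S0 z, H1 z & ~ S1 z].
Definition be (z : R * R) : R := dot (- t.2, t.1) z.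
Definition al (z : R * R) : R := dot t z.

Lemma vsub_cp z : vsub z cp = vsub (mv z) c.
Proof. by rewrite /vsub /cp /mv /=; congr (_, _); ring. Qed.

Lemma H1_iff z : H1 z <-> H0 (mv z).
Proof. by split => h j; have := h j; rewrite vsub_cp. Qed.

Lemma S1_iff z : S1 z <-> S0 (mv z).
Proof. by split => h j; have := h j; rewrite vsub_cp. Qed.

Lemma dot_lerp (n a b cc : R * R) s :
  dot n (vsub (lerp a b s) cc) = (1 - s) * dot n (vsub a cc) + s * dot n (vsub b cc).
Proof. rewrite /dot /vsub /lerp /=; ring. Qed.

Lemma S_lerp cc a b s : Hs k r th cc a -> Ssk k r th cc b -> 0 < s <= 1 ->
  Ssk k r th cc (lerp a b s).
Proof.
move=> ha hb /andP [s0 s1] j; rewrite dot_lerp.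
have := ha j; have := hb j; set x := dot _ (vsub a cc); set y := dot _ (vsub b cc) => hy hx.
have : (1 - s) * x <= (1 - s) * rho k r by apply: ler_wpM2l => //; lra.
have : s * y < s * rho k r by rewrite ltr_pM2l.
lra.
Qed.

Lemma H_lerp cc a b s : Hs k r th cc a -> Hs k r th cc b -> 0 <= s <= 1 ->
  Hs k r th cc (lerp a b s).
Proof.
move=> ha hb /andP [s0 s1] j; rewrite dot_lerp.
have := ha j; have := hb j; set x := dot _ (vsub a cc); set y := dot _ (vsub b cc) => hy hx.
have : (1 - s) * x <= (1 - s) * rho k r by apply: ler_wpM2l => //; lra.
have : s * y <= s * rho k r by apply: ler_wpM2l.
lra.
Qed.

Lemma line_S cc q a b m : Hs k r th cc (Pl q a) -> Ssk k r th cc (Pl q b) ->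
  (a < m <= b) \/ (b <= m < a) -> Ssk k r th cc (Pl q m).
Proof.
move=> ha hb hm.
have ab : b - a != 0 by case: hm => /andP [h1 h2]; apply/eqP; lra.
have -> : Pl q m = lerp (Pl q a) (Pl q b) ((m - a) / (b - a)).
  by rewrite /Pl /lerp /=; congr (_, _); field.
apply: S_lerp => //; apply/andP; split.
  case: hm => /andP [h1 h2].
    by apply: divr_gt0; lra.
  have -> : (m - a) / (b - a) = (a - m) / (a - b) by rewrite -[m - a]opprB -[b - a]opprB invrN mulrNN.
  by apply: divr_gt0; lra.
case: hm => /andP [h1 h2].
  by rewrite ler_pdivrMr; lra.
have -> : (m - a) / (b - a) = (a - m) / (a - b) by rewrite -[m - a]opprB -[b - a]opprB invrN mulrNN.
by rewrite ler_pdivrMr; lra.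
Qed.

Lemma mvP q u : mv (Pl q u) = Pl q (u - 1).
Proof. by rewrite /mv /Pl /=; congr (_, _); ring. Qed.

Lemma Pl0 q : Pl q 0 = q.
Proof. by rewrite /Pl !mul0r !addr0 -surjective_pairing. Qed.

Lemma par q z : be z = be q -> z = Pl q ((al z - al q) / (t.1 ^+ 2 + t.2 ^+ 2)).
Proof.
rewrite /be /al /dot /Pl /= => h.
have h' : t.1 * (z.2 - q.2) = t.2 * (z.1 - q.1) by lra.
rewrite [z]surjective_pairing /=; congr (_, _).
  have e1 : (t.1 * z.1 + t.2 * z.2 - (t.1 * q.1 + t.2 * q.2)) * t.1 =
      (z.1 - q.1) * (t.1 ^+ 2 + t.2 ^+ 2).
    transitivity (t.1 ^+ 2 * (z.1 - q.1) + t.2 * (t.1 * (z.2 - q.2))); first by ring.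
    rewrite h'; ring.
  by rewrite mulrAC e1 mulfK //; ring.
have e2 : (t.1 * z.1 + t.2 * z.2 - (t.1 * q.1 + t.2 * q.2)) * t.2 =
    (z.2 - q.2) * (t.1 ^+ 2 + t.2 ^+ 2).
  transitivity (t.1 * (t.2 * (z.1 - q.1)) + t.2 ^+ 2 * (z.2 - q.2)); first by ring.
  rewrite -h'; ring.
by rewrite mulrAC e2 mulfK //; ring.
Qed.

Lemma mvx x : mv x = Pl x (-1).
Proof. by rewrite -{1}(Pl0 x) mvP sub0r. Qed.

Lemma L1 x z0 : Zm x -> S0 z0 -> S1 z0 -> be z0 = be x -> False.
Proof.
move=> [hx0 nx0 hx1 nx1] hz0 hz1 hb.
have e := par hb; move: e; set mu := (_ / _) => e.
have [mu0|mu0|mu0] := ltgtP mu 0.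
- apply: nx1; apply/S1_iff; rewrite mvx.
  have h1 : S0 (Pl x (mu - 1)) by rewrite -mvP -e; apply/S1_iff.
  apply: (line_S (a := 0) (b := mu - 1)); first by rewrite Pl0.
    exact: h1.
  by right; apply/andP; split; lra.
- apply: nx0; rewrite -(Pl0 x).
  apply: (line_S (a := -1) (b := mu)).
      by rewrite -mvx; apply/H1_iff.
    by rewrite -e.
  by left; apply/andP; split; lra.
- by apply: nx0; move: hz0; rewrite e mu0 Pl0.
Qed.

Lemma L2 x w p : Zm x -> S0 w -> S1 w -> H0 p -> H1 p ->
  (be w < be x < be p) \/ (be p < be x < be w) -> False.
Proof.
move=> zx hw0 hw1 hp0 hp1 hbt.
have dn : be w - be p != 0 by case: hbt => /andP [h1 h2]; apply/eqP; lra.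
pose s := (be x - be p) / (be w - be p).
have s01 : 0 < s <= 1.
  rewrite /s; case: hbt => /andP [h1 h2]; apply/andP; split.
  - have -> : (be x - be p) / (be w - be p) = (be p - be x) / (be p - be w).
      by rewrite -[be x - be p]opprB -[be w - be p]opprB invrN mulrNN.
    by apply: divr_gt0; lra.
  - have -> : (be x - be p) / (be w - be p) = (be p - be x) / (be p - be w).
      by rewrite -[be x - be p]opprB -[be w - be p]opprB invrN mulrNN.
    by rewrite ler_pdivrMr; lra.
  - by apply: divr_gt0; lra.
  - by rewrite ler_pdivrMr; lra.
apply: (L1 zx (z0 := lerp p w s)).
- exact: S_lerp.
- exact: S_lerp.
- have -> : be (lerp p w s) = be p + s * (be w - be p) by rewrite /be /lerp /dot /=; ring.
  rewrite /s; field => //.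
Qed.

Lemma Seg x mu u : Zm x -> Zm (Pl x mu) -> 0 <= mu -> 0 <= u <= mu -> Zm (Pl x u).
Proof.
move=> [hx0 nx0 hx1 nx1] [hy0 ny0 hy1 ny1] mu0 /andP [u0 umu].
have [mz|mnz] := eqVneq mu 0.
  have -> : u = 0 by lra.
  by rewrite Pl0.
have mpos : 0 < mu by lra.
have hlu : Pl x u = lerp x (Pl x mu) (u / mu).
  by rewrite /lerp /Pl /=; congr (_, _); field.
have su : 0 <= u / mu <= 1.
  by apply/andP; split; [exact: divr_ge0 | rewrite ler_pdivrMr //; lra].
split.
- by rewrite hlu; apply: H_lerp => //; rewrite -(Pl0 x).
- move=> hs.
  have [uz|unz] := eqVneq u 0; first by apply: nx0; rewrite -(Pl0 x) -uz.
  apply: nx0; rewrite -(Pl0 x).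
  apply: (line_S (a := -1) (b := u)) => //.
    by rewrite -mvx; apply/H1_iff.
  by left; apply/andP; split; lra.
- by rewrite hlu; apply: H_lerp => //; rewrite -(Pl0 x).
- move=> /S1_iff hs; rewrite mvP in hs.
  apply: ny1; apply/S1_iff; rewrite mvP.
  apply: (line_S (a := mu) (b := u - 1)) => //.
  by right; apply/andP; split; lra.
Qed.
Lemma contPl q : continuous (Pl q).
Proof.
move=> u; rewrite /Pl.
apply: (@cvg_pair _ _ _ (nbhs u) (nbhs (q.1 + u * t.1)) (nbhs (q.2 + u * t.2))).
  apply: cvgD; first exact: cvg_cst.
  apply: cvgMl; exact: cvg_id.
apply: cvgD; first exact: cvg_cst.
apply: cvgMl; exact: cvg_id.
Qed.

Lemma seg_comp (Zs : set (R * R)) a mu : (forall z, Zm z -> Zs z) -> Zm a -> Zm (Pl a mu) -> 0 <= mu ->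
  exists C : set (R * R), [/\ C a, C (Pl a mu), C `<=` Zs & connected C].
Proof.
move=> hZ za zb mu0.
exists [set Pl a u | u in `[0, mu]%classic]; split.
- by exists 0; [rewrite /= in_itv /= lexx mu0 | exact: Pl0].
- by exists mu => //; rewrite /= in_itv /= lexx mu0.
- move=> z [u hu <-]; apply: hZ; move: hu; rewrite /= in_itv /= => hu.
  exact: (Seg (mu := mu)).
- apply: connected_continuous_connected; first exact: segment_connected.
  apply: continuous_subspaceT; exact: contPl.
Qed.

Lemma Zm_conn (Zs : set (R * R)) x y : (forall z, Zm z -> Zs z) -> Zm x -> Zm y -> be x = be y ->
  connected_component Zs x y.
Proof.
move=> hZ zx zy hb.
have [mu0|mu0] := lerP 0 ((al y - al x) / (t.1 ^+ 2 + t.2 ^+ 2)).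
  have ey := par (esym hb).
  have zy' : Zm (Pl x ((al y - al x) / (t.1 ^+ 2 + t.2 ^+ 2))) by rewrite -ey.
  have [C [Cx Cy CZ cC]] := seg_comp hZ zx zy' mu0.
  by exists C => //; rewrite ey.
have ex := par hb.
have mu1 : 0 <= (al x - al y) / (t.1 ^+ 2 + t.2 ^+ 2).
  have -> : (al x - al y) / (t.1 ^+ 2 + t.2 ^+ 2) = - ((al y - al x) / (t.1 ^+ 2 + t.2 ^+ 2)).
    by rewrite -mulNr opprB.
  by rewrite oppr_ge0 ltW.
have zx' : Zm (Pl y ((al x - al y) / (t.1 ^+ 2 + t.2 ^+ 2))) by rewrite -ex.
have [C [Cy Cx CZ cC]] := seg_comp hZ zy zx' mu1.
by exists C => //; split => //; rewrite ex.
Qed.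
End Geo.

Section Frame.
Variable R : realType.

Lemma angle_ge (x p y : R * R) : p <> x -> p <> y ->
  dot (vsub x p) (vsub y p) <= `|cross (vsub x p) (vsub y p)| -> pi / 4 <= angle x p y.
Proof.
move=> px py hdc.
rewrite /angle.
set a := vsub x p; set b := vsub y p.
have a0 : 0 < dot a a.
  rewrite /a /dot /vsub /=; rewrite lt0r; apply/andP; split; last by rewrite -!expr2 addr_ge0 ?sqr_ge0.
  apply/negP; rewrite -!expr2 paddr_eq0 ?sqr_ge0 // !sqrf_eq0 => /andP [/eqP h1 /eqP h2].
  apply: px.
  rewrite [p]surjective_pairing [x]surjective_pairing; congr (_, _); lra.
have b0 : 0 < dot b b.
  rewrite /b /dot /vsub /=; rewrite lt0r; apply/andP; split; last by rewrite -!expr2 addr_ge0 ?sqr_ge0.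
  apply/negP; rewrite -!expr2 paddr_eq0 ?sqr_ge0 // !sqrf_eq0 => /andP [/eqP h1 /eqP h2].
  apply: py.
  rewrite [p]surjective_pairing [y]surjective_pairing; congr (_, _); lra.
set N := vnorm a * vnorm b.
have N0 : 0 < N by rewrite /N /vnorm; apply: mulr_gt0; rewrite sqrtr_gt0.
have N2 : N ^+ 2 = dot a a * dot b b.
  by rewrite /N exprMn /vnorm !sqr_sqrtr //; apply: ltW.
have lag : dot a a * dot b b = dot a b ^+ 2 + cross a b ^+ 2.
  by rewrite /dot /cross; ring.
set d := dot a b in hdc lag *; set cr := cross a b in hdc lag *.
have hc := cos_pi4_gt0 R; have hc2 := cos_pi4_sq R.
have cle : d / N <= cos (pi / 4).
  have [dn|dp] := lerP d 0.
    apply: le_trans (_ : 0 <= _); last exact: ltW.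
    by rewrite pmulr_lle0 // invr_gt0.
  rewrite ler_pdivrMr //.
  have : d ^+ 2 <= cr ^+ 2.
    rewrite -ler_sqr ?nnegrE in hdc; [| exact: ltW | exact: normr_ge0].
    by move: hdc; rewrite real_normK ?num_real.
  move=> hdd.
  have : d ^+ 2 <= (cos (pi / 4) * N) ^+ 2.
    rewrite exprMn hc2 N2 lag; lra.
  rewrite ler_sqr ?nnegrE //; [exact: ltW | apply: mulr_ge0; exact: ltW].
have cge : -1 <= d / N.
  rewrite ler_pdivlMr // mulN1r.
  have : d ^+ 2 <= N ^+ 2 by rewrite N2 lag; have := sqr_ge0 cr; lra.
  move=> h; have : `|d| <= `|N| by rewrite -ler_sqr ?nnegrE // !real_normK ?num_real.
  rewrite (gtr0_norm N0) => h'; have := ler_norm (- d); rewrite normrN; lra.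
rewrite leNgt; apply/negP => hlt.
have hpi := pi_gt0 R.
have i1 : acos (d / N) \in `[0, pi].
  rewrite in_itv /=; apply/andP; split; [apply: acos_ge0 | apply: acos_lepi];
  apply/andP; split => //; have := @cos_le1 R (pi / 4); lra.
have i2 : (pi / 4 : R) \in `[0, pi] by rewrite in_itv /=; apply/andP; split; lra.
have := ltr_cos i1 i2; rewrite hlt acosK; last first.
  rewrite in_itv /=; apply/andP; split => //; have := @cos_le1 R (pi / 4); lra.
move=> /esym; rewrite ltNge cle //.
Qed.

End Frame.
Section Core.
Variable R : realType.
Variable u : R * R.
Hypothesis u0 : u.1 ^+ 2 + u.2 ^+ 2 != 0.
Let T := u.1 ^+ 2 + u.2 ^+ 2.
Let L := Num.sqrt T.
Let V : R * R := (- u.2, u.1).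
Definition fr1 (z : R * R) := dot u z / L.
Definition fr2 (z : R * R) := dot V z / L.

Lemma T_gt0 : 0 < T.
Proof. by rewrite /T lt0r u0 addr_ge0 ?sqr_ge0. Qed.

Lemma L_gt0 : 0 < L.
Proof. by rewrite /L sqrtr_gt0; exact: T_gt0. Qed.

Lemma LL : L * L = T.
Proof. by rewrite -expr2 /L sqr_sqrtr //; exact: ltW T_gt0. Qed.

Lemma fr_dot a b : fr1 a * fr1 b + fr2 a * fr2 b = dot a b.
Proof.
have L0 : L != 0 by exact: lt0r_neq0 L_gt0.
have T0 : T != 0 by exact: lt0r_neq0 T_gt0.
rewrite /fr1 /fr2.
transitivity ((dot u a * dot u b + dot V a * dot V b) / (L * L)); first by field.
rewrite LL -[RHS](mulfK T0); congr (_ / _).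
by rewrite /dot /V /T /=; ring.
Qed.

Lemma fr_cross a b : fr1 a * fr2 b - fr2 a * fr1 b = cross a b.
Proof.
have L0 : L != 0 by exact: lt0r_neq0 L_gt0.
have T0 : T != 0 by exact: lt0r_neq0 T_gt0.
rewrite /fr1 /fr2.
transitivity ((dot u a * dot V b - dot V a * dot u b) / (L * L)); first by field.
rewrite LL -[RHS](mulfK T0); congr (_ / _).
by rewrite /dot /V /T /cross /=; ring.
Qed.

Lemma fr1_sub a b o : fr1 (vsub a o) - fr1 (vsub b o) = fr1 (vsub a b).
Proof. rewrite /fr1 /dot /vsub /=; field; exact: lt0r_neq0 L_gt0. Qed.
Lemma fr2_sub a b o : fr2 (vsub a o) - fr2 (vsub b o) = fr2 (vsub a b).
Proof. rewrite /fr2 /dot /vsub /=; field; exact: lt0r_neq0 L_gt0. Qed.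

Lemma fr1_ge0 z : 0 <= dot u z -> 0 <= fr1 z.
Proof. by move=> h; apply: divr_ge0 => //; exact: ltW L_gt0. Qed.
Lemma fr2_ge0 z : 0 <= dot V z -> 0 <= fr2 z.
Proof. by move=> h; apply: divr_ge0 => //; exact: ltW L_gt0. Qed.
Lemma fr2_gt0 z : 0 < dot V z -> 0 < fr2 z.
Proof. by move=> h; apply: divr_gt0 => //; exact: L_gt0. Qed.

Lemma core_abs (o x y p n m : R * R) (rho r : R) :
  0 < rho -> r ^+ 2 <= 2 * rho ^+ 2 ->
  dot (vsub x o) (vsub x o) <= r ^+ 2 -> dot (vsub y o) (vsub y o) <= r ^+ 2 ->
  dot (vsub p o) (vsub p o) <= r ^+ 2 ->
  dot n n = 1 -> dot m m = 1 -> dot u n <= 0 -> dot u m <= 0 ->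
  dot n (vsub x o) = rho -> dot m (vsub y o) = rho ->
  dot n (vsub p o) <= rho -> dot m (vsub p o) <= rho ->
  dot n (vsub y o) <= rho -> dot m (vsub x o) <= rho ->
  0 <= dot V (vsub x p) -> 0 <= dot V (vsub p y) -> 0 < dot V (vsub x y) ->
  0 <= dot u (vsub x p) -> 0 <= dot u (vsub y p) ->
  dot (vsub x p) (vsub y p) <= `|cross (vsub x p) (vsub y p)|.
Proof.
move=> rho0 hr hx hy hp hn hm nu mu nx my np mp ny mx vxp vpy vxy uxp uyp.
have := @core_coord R rho r (fr1 (vsub x o)) (fr2 (vsub x o)) (fr1 (vsub y o)) (fr2 (vsub y o))
  (fr1 (vsub p o)) (fr2 (vsub p o)) (fr1 n) (fr2 n) (fr1 m) (fr2 m) rho0 hr.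
rewrite !expr2 !fr_dot !fr1_sub !fr2_sub fr_dot.
have -> : (fr1 (vsub x p) * fr2 (vsub y p) - fr2 (vsub x p) * fr1 (vsub y p)) =
  cross (vsub x p) (vsub y p) by rewrite fr_cross.
have fo : forall a b, fr1 a * fr1 b + fr2 a * fr2 b = dot a b := fr_dot.
apply => //.
- by rewrite /fr1 pmulr_lle0 ?invr_gt0 ?L_gt0 // /dot mulrC (mulrC u.2); move: nu; rewrite /dot.
- by rewrite /fr1 pmulr_lle0 ?invr_gt0 ?L_gt0 // /dot mulrC (mulrC u.2); move: mu; rewrite /dot.
- by rewrite -subr_ge0 fr1_sub; exact: fr1_ge0.
- by rewrite -subr_ge0 fr1_sub; exact: fr1_ge0.
- by rewrite -subr_ge0 fr2_sub; exact: fr2_ge0.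
- by rewrite -subr_ge0 fr2_sub; exact: fr2_ge0.
- by rewrite -subr_gt0 fr2_sub; exact: fr2_gt0.
Qed.

End Core.

Lemma dot_sym (R : realType) (a b : R * R) : dot a b = dot b a.
Proof. by rewrite /dot mulrC (mulrC a.2). Qed.

Lemma cross_anti (R : realType) (a b : R * R) : `|cross a b| = `|cross b a|.
Proof. by rewrite -normrN /cross opprB (mulrC a.1) (mulrC a.2). Qed.

Lemma sq_disk (R : realType) (a o : R * R) (r : R) :
  (a.1 - o.1) ^+ 2 + (a.2 - o.2) ^+ 2 <= r ^+ 2 -> dot (vsub a o) (vsub a o) <= r ^+ 2.
Proof. by rewrite /dot /vsub /= -!expr2. Qed.

Lemma normal_of (R : realType) (k : nat) (r th : R) (o z : R * R) :
  Hs k r th o z -> ~ Ssk k r th o z ->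
  exists j : 'I_k, dot (nv k th j) (vsub z o) = rho k r.
Proof.
move=> hH /existsNP [j hj]; exists j; apply/eqP; rewrite eq_le hH /=.
by rewrite leNgt; apply/negP.
Qed.

Lemma main_ineq (R : realType) (k : nat) (r th : R) (c t a b p : R * R) :
  (4 <= k)%N -> 0 < r -> t.1 ^+ 2 + t.2 ^+ 2 != 0 ->
  Zm k r th c t a -> Zm k r th c t b ->
  Hs k r th c p -> Hs k r th (cp c t) p ->
  be t p <= be t a -> be t b <= be t p -> be t b < be t a ->
  dot (vsub a c) (vsub a c) <= r ^+ 2 -> dot (vsub a (cp c t)) (vsub a (cp c t)) <= r ^+ 2 ->
  dot (vsub b c) (vsub b c) <= r ^+ 2 -> dot (vsub b (cp c t)) (vsub b (cp c t)) <= r ^+ 2 ->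
  dot (vsub p c) (vsub p c) <= r ^+ 2 -> dot (vsub p (cp c t)) (vsub p (cp c t)) <= r ^+ 2 ->
  dot (vsub a p) (vsub b p) <= `|cross (vsub a p) (vsub b p)|.
Proof.
move=> hk hr t0 [ha0 na0 ha1 na1] [hb0 nb0 hb1 nb1] hp0 hp1 bpa bbp bab da0 da1 db0 db1 dp0 dp1.
have rho0 := rho_gt0 hk hr.
have rb := rho_bound hk r.
have nu : forall j : 'I_k, dot (nv k th j) (nv k th j) = 1.
  by move=> j; rewrite /dot -!expr2; exact: nv_unit.
have Va : dot (- t.2, t.1) (vsub a p) = be t a - be t p by rewrite /be /dot /vsub /=; ring.
have Vb : dot (- t.2, t.1) (vsub p b) = be t p - be t b by rewrite /be /dot /vsub /=; ring.
have Vab : dot (- t.2, t.1) (vsub a b) = be t a - be t b by rewrite /be /dot /vsub /=; ring.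
have [ua0|ua0] := lerP 0 (dot t (vsub a p)); have [ub0|ub0] := lerP 0 (dot t (vsub b p)).
- (* behind: use the translated polygon *)
  have [j hj] := normal_of ha1 na1.
  have [j' hj'] := normal_of hb1 nb1.
  have shift : forall (n z : R * R), dot n (vsub z c) = dot n (vsub z (cp c t)) + dot t n.
    by move=> n z; rewrite /dot /vsub /cp /=; ring.
  have tn : dot t (nv k th j) <= 0 by have := ha0 j; rewrite shift hj; lra.
  have tm : dot t (nv k th j') <= 0 by have := hb0 j'; rewrite shift hj'; lra.
  apply: (core_abs (u := t) t0 (o := cp c t) (n := nv k th j) (m := nv k th j') (rho := rho k r) (r := r)) => //.
  + by rewrite Va subr_ge0.
  + by rewrite Vb subr_ge0.
  + by rewrite Vab subr_gt0.
-
  have : dot (vsub a p) (vsub b p) <= 0.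
    have e : (t.1 ^+ 2 + t.2 ^+ 2) * dot (vsub a p) (vsub b p) =
      dot t (vsub a p) * dot t (vsub b p) + dot (- t.2, t.1) (vsub a p) * dot (- t.2, t.1) (vsub b p).
      by rewrite /dot /vsub /=; ring.
    have T0 : 0 < t.1 ^+ 2 + t.2 ^+ 2 by rewrite lt0r t0 addr_ge0 ?sqr_ge0.
    rewrite -(pmulr_rle0 _ T0) e.
    have h1 : dot t (vsub a p) * dot t (vsub b p) <= 0 by apply: mulr_ge0_le0 => //; exact: ltW.
    have h2 : dot (- t.2, t.1) (vsub a p) * dot (- t.2, t.1) (vsub b p) <= 0.
      apply: mulr_ge0_le0; first by rewrite Va subr_ge0.
      have -> : dot (- t.2, t.1) (vsub b p) = - dot (- t.2, t.1) (vsub p b) by rewrite /dot /vsub /=; ring.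
      by rewrite oppr_le0 Vb subr_ge0.
    lra.
  by move=> h; apply: le_trans h _.
- have : dot (vsub a p) (vsub b p) <= 0.
    have e : (t.1 ^+ 2 + t.2 ^+ 2) * dot (vsub a p) (vsub b p) =
      dot t (vsub b p) * dot t (vsub a p) + dot (- t.2, t.1) (vsub a p) * dot (- t.2, t.1) (vsub b p).
      by rewrite /dot /vsub /=; ring.
    have T0 : 0 < t.1 ^+ 2 + t.2 ^+ 2 by rewrite lt0r t0 addr_ge0 ?sqr_ge0.
    rewrite -(pmulr_rle0 _ T0) e.
    have h1 : dot t (vsub b p) * dot t (vsub a p) <= 0 by apply: mulr_ge0_le0 => //; exact: ltW.
    have h2 : dot (- t.2, t.1) (vsub a p) * dot (- t.2, t.1) (vsub b p) <= 0.
      apply: mulr_ge0_le0; first by rewrite Va subr_ge0.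
      have -> : dot (- t.2, t.1) (vsub b p) = - dot (- t.2, t.1) (vsub p b) by rewrite /dot /vsub /=; ring.
      by rewrite oppr_le0 Vb subr_ge0.
    lra.
  by move=> h; apply: le_trans h _.
- (* front: use the original polygon, with -t *)
  have [j hj] := normal_of ha0 na0.
  have [j' hj'] := normal_of hb0 nb0.
  have shift : forall (n z : R * R), dot n (vsub z (cp c t)) = dot n (vsub z c) - dot t n.
    by move=> n z; rewrite /dot /vsub /cp /=; ring.
  have tn : 0 <= dot t (nv k th j) by have := ha1 j; rewrite shift hj; lra.
  have tm : 0 <= dot t (nv k th j') by have := hb1 j'; rewrite shift hj'; lra.
  have t0' : (- t).1 ^+ 2 + (- t).2 ^+ 2 != 0 by rewrite /= !sqrrN.
  have nt : forall z : R * R, dot (- t) z = - dot t z by move=> z; rewrite /dot /=; ring.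
  have Vt : forall z : R * R, dot (- (- t).2, (- t).1) z = - dot (- t.2, t.1) z.
    by move=> z; rewrite /dot /=; ring.
  rewrite dot_sym cross_anti.
  apply: (core_abs (u := - t) t0' (o := c) (n := nv k th j') (m := nv k th j) (rho := rho k r) (r := r)) => //.
  + by rewrite nt oppr_le0.
  + by rewrite nt oppr_le0.
  + rewrite Vt.
    have -> : dot (- t.2, t.1) (vsub b p) = - dot (- t.2, t.1) (vsub p b) by rewrite /dot /vsub /=; ring.
    by rewrite opprK Vb subr_ge0.
  + rewrite Vt.
    have -> : dot (- t.2, t.1) (vsub p a) = - dot (- t.2, t.1) (vsub a p) by rewrite /dot /vsub /=; ring.
    by rewrite opprK Va subr_ge0.
  + rewrite Vt.
    have -> : dot (- t.2, t.1) (vsub b a) = - dot (- t.2, t.1) (vsub a b) by rewrite /dot /vsub /=; ring.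
    by rewrite opprK Vab subr_gt0.
  + by rewrite nt oppr_ge0 ltW.
  + by rewrite nt oppr_ge0 ltW.
Qed.

Unset Implicit Arguments.

Theorem lemma8 (R : realType) (k : nat) (sigma : set (R * R)%type) (t : (R * R)%type)
  (p x y : (R * R)%type) :
  (4 <= k)%N ->
  is_regular_kgon k sigma ->
  sigma <> translate t sigma ->
  interior sigma `&` interior (translate t sigma) !=set0 ->
  (sigma `&` translate t sigma) p ->
  (boundary sigma `&` boundary (translate t sigma)) x ->
  (boundary sigma `&` boundary (translate t sigma)) y ->
  ~ connected_component (boundary sigma `&` boundary (translate t sigma)) x y ->
  p <> x -> p <> y ->
  pi / 4 <= angle x p y.
Proof.
move=> hk [c [r [th [hr ->]]]] hneq [w0 [hw0a hw0b]] [hp1 hp2] [[hx1 hx2] [hx3 hx4]]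
  [[hy1 hy2] [hy3 hy4]] hnc px py.
have tr := translate_poly hk th hr c t.
rewrite tr in hneq hw0b hp2 hx3 hx4 hy3 hy4 hnc.
set c' := (c.1 + t.1, c.2 + t.2) in hneq hw0b hp2 hx3 hx4 hy3 hy4 hnc.
have dp0 := poly_disk hp1; have dp1 := poly_disk hp2.
have hxK : regular_polygon k c r th x by rewrite poly_eq // -(closure_poly hk th hr).
have hxK' : regular_polygon k c' r th x by rewrite poly_eq // -(closure_poly hk th hr).
have hyK : regular_polygon k c r th y by rewrite poly_eq // -(closure_poly hk th hr).
have hyK' : regular_polygon k c' r th y by rewrite poly_eq // -(closure_poly hk th hr).
have dx0 := poly_disk hxK; have dx1 := poly_disk hxK'.
have dy0 := poly_disk hyK; have dy1 := poly_disk hyK'.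
rewrite !(int_poly hk th hr) in hw0a hw0b hx2 hx4 hy2 hy4.
rewrite !(closure_poly hk th hr) in hx1 hx3 hy1 hy3.
rewrite !(poly_eq hk th hr) in hp1 hp2.
have t0 : t.1 ^+ 2 + t.2 ^+ 2 != 0.
  apply/negP; rewrite paddr_eq0 ?sqr_ge0 // !sqrf_eq0 => /andP [/eqP h1 /eqP h2].
  apply: hneq; rewrite /c' h1 h2 !addr0 -surjective_pairing //.
have zx : Zm k r th c t x by split.
have zy : Zm k r th c t y by split.
have hZ : forall z, Zm k r th c t z ->
    (boundary (regular_polygon k c r th) `&` boundary (regular_polygon k c' r th)) z.
  move=> z [a1 a2 a3 a4]; split; split;
    rewrite ?(int_poly hk th hr) ?(closure_poly hk th hr) //.
have bne : forall z, Zm k r th c t z -> be t z != be t w0.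
  by move=> z zz; apply/eqP => e; apply: (L1 t0 zz hw0a hw0b (esym e)).
have clsT : forall z, Zm k r th c t z -> be t w0 < be t z ->
    forall q, Hs k r th c q -> Hs k r th c' q -> be t q <= be t z.
  move=> z zz hlt q hq0 hq1; rewrite leNgt; apply/negP => hlt2.
  by apply: (L2 t0 zz hw0a hw0b hq0 hq1); left; apply/andP.
have clsB : forall z, Zm k r th c t z -> be t z < be t w0 ->
    forall q, Hs k r th c q -> Hs k r th c' q -> be t z <= be t q.
  move=> z zz hlt q hq0 hq1; rewrite leNgt; apply/negP => hlt2.
  by apply: (L2 t0 zz hw0a hw0b hq0 hq1); right; apply/andP.
have hxw := bne x zx; have hyw := bne y zy.
have conn : be t x = be t y -> False.
  by move=> e; apply: hnc; apply: (Zm_conn t0 hZ zx zy e).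
have ddx0 := sq_disk dx0; have ddx1 := sq_disk dx1; have ddy0 := sq_disk dy0.
have ddy1 := sq_disk dy1; have ddp0 := sq_disk dp0; have ddp1 := sq_disk dp1.
have [xb|xt] := ltrP (be t x) (be t w0); last first.
  have xt' : be t w0 < be t x by rewrite lt_neqAle eq_sym hxw xt.
  have [yb|yt] := ltrP (be t y) (be t w0); last first.
    have yt' : be t w0 < be t y by rewrite lt_neqAle eq_sym hyw yt.
    exfalso; apply: conn; apply/eqP; rewrite eq_le.
    by rewrite (clsT y zy yt' x hx1 hx3) (clsT x zx xt' y hy1 hy3).
  apply: angle_ge => //.
  apply: (main_ineq hk hr t0 zx zy hp1 hp2) => //.
  - exact: (clsT x zx xt' p hp1 hp2).
  - exact: (clsB y zy yb p hp1 hp2).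
  - by apply: lt_trans yb xt'.
have [yb|yt] := ltrP (be t y) (be t w0).
  exfalso; apply: conn; apply/eqP; rewrite eq_le.
  by rewrite (clsB x zx xb y hy1 hy3) (clsB y zy yb x hx1 hx3).
have yt' : be t w0 < be t y by rewrite lt_neqAle eq_sym hyw yt.
apply: angle_ge => //.
rewrite dot_sym cross_anti.
apply: (main_ineq hk hr t0 zy zx hp1 hp2) => //.
- exact: (clsT y zy yt' p hp1 hp2).
- exact: (clsB x zx xb p hp1 hp2).
- by apply: lt_trans xb yt'.
Qed.
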